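(* Let $\mathcal C$ be a complete and cocomplete category with two sets of maps $I$ and $J$ such that: (1) $(I\text{-cof},I\text{-fib})$ and $(J\text{-cof},J\text{-fib})$ are weak factorization systems and $J\subseteq I\text{-cof}$; (2) $\mathcal C$ is endowed with a left adjoint endofunctor $X\mapsto CX$ and natural transformations $e_0,e_1\colon \mathrm{Id}\Rightarrow C$; (3) for any $i\colon A\to B$ in $I$, the map $(B\sqcup B)\sqcup_{A\sqcup A}CA\to CB$ induced by $(e_0,e_1)$ and $C(i)$ is an $I$-cofibration; (4) for any $i\colon A\to B$ in $I$, the two maps $B\sqcup_A CA\to CB$ (for $\epsilon=0,1$, induced by $e_\epsilon$ and $C(i)$, the pushout being of $i$ and $e_{\epsilon,A}\colon A\to CA$) have the left lifting property against all $J$-fibrations between $J$-fibrant objects; (5) for any $j\colon A\to B$ in $J$, the map $(B\sqcup B)\sqcup_{A\sqcup A}CA\to CB$ has the left lifting property against all $J$-fibrations between $J$-fibrant objects. Then there is a weak model structure on $\mathcal C$ such that the fibrations between fibrant objects are the $J$-fibrations and the cofibrations between cofibrant objects are the $I$-cofibrations.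
   Context: All existence statements are understood constructively as chosen data. For a set of maps $I$, an $I$-fibration is a map with the right lifting property against every map of $I$, and an $I$-cofibration is a map with the left lifting property against every $I$-fibration; $X$ is $J$-fibrant if $X\to1$ is a $J$-fibration. $(I\text{-cof},I\text{-fib})$ is a weak factorization system when every map factors as an $I$-cofibration followed by an $I$-fibration. Weak model category: a category with a class of cofibrations (a class of maps containing isomorphisms with cofibrant domain, closed under composition, with a cofibrant initial object $0$, and such that pushouts of a cofibration $A\to B$ along $A\to C$ with $A,C$ cofibrant exist and $C\to C\sqcup_AB$ is a cofibration; $X$ cofibrant means $0\to X$ is a cofibration) and a class of fibrations (dual notion). Acyclic fibration: fibration with the right lifting property against all cofibrations between cofibrant objects; acyclic cofibration: cofibration with the left lifting property against all fibrations between fibrant objects. Axioms: every map from a cofibrant to a fibrant object factors as cofibration followed by acyclic fibration and as acyclic cofibration followed by fibration; every cofibration $A\to B$ from a cofibrant to a fibrant object has a relative strong cylinder object (a factorization $B\sqcup_AB\to I_AB\to B$ of the codiagonal, first map a cofibration, its restriction to the first copy of $B$ an acyclic cofibration); every fibration $Y\to X$ from a cofibrant to a fibrant object has a relative strong path object (dual factorization $Y\to P_XY\to Y\times_XY$ of the diagonal, second map a fibration, composite with first projection an acyclic fibration). *)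

(* Defs.v *)
(* Plain Rocq (no library needed): a small, honest development of the
   category-theoretic notions used in the statement.
   Composition is written in DIAGRAMMATIC order:  f >>> g  means "f, then g". *)

Set Implicit Arguments.

Record Category := {
  Obj :> Type;
  Hom : Obj -> Obj -> Type;
  cid : forall A, Hom A A;
  comp : forall A B C, Hom A B -> Hom B C -> Hom A C;
  comp_id_l : forall A B (f : Hom A B), comp (cid A) f = f;
  comp_id_r : forall A B (f : Hom A B), comp f (cid B) = f;
  comp_assoc : forall A B C D (f : Hom A B) (g : Hom B C) (h : Hom C D),
      comp (comp f g) h = comp f (comp g h)
}.
Arguments Hom {_} _ _.
Arguments cid {_} _.
Arguments comp {_ _ _ _} _ _.
Notation "f >>> g" := (comp f g) (at level 40, left associativity).

Definition MapClass (C : Category) := forall A B : C, Hom A B -> Prop.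

(** * Small categories and (small) diagrams: "small" = living in [Set] *)
Record SmallCategory := {
  sObj :> Set;
  sHom : sObj -> sObj -> Set;
  sid : forall a, sHom a a;
  scomp : forall a b c, sHom a b -> sHom b c -> sHom a c;
  scomp_id_l : forall a b (f : sHom a b), scomp (sid a) f = f;
  scomp_id_r : forall a b (f : sHom a b), scomp f (sid b) = f;
  scomp_assoc : forall a b c d (f : sHom a b) (g : sHom b c) (h : sHom c d),
      scomp (scomp f g) h = scomp f (scomp g h)
}.
Arguments sHom {_} _ _.
Arguments sid {_} _.
Arguments scomp {_ _ _ _} _ _.

Record Diagram (J : SmallCategory) (C : Category) := {
  dob : J -> C;
  dmap : forall a b : J, sHom a b -> Hom (dob a) (dob b);
  dmap_id : forall a, dmap a a (sid a) = cid (dob a);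
  dmap_comp : forall a b c (f : sHom a b) (g : sHom b c),
      dmap a c (scomp f g) = dmap a b f >>> dmap b c g
}.
Arguments dob {_ _} _ _.
Arguments dmap {_ _} _ {_ _} _.

Definition is_limit (J : SmallCategory) (C : Category) (D : Diagram J C)
  (L : C) (pi : forall a, Hom L (dob D a)) : Prop :=
  (forall a b (u : sHom a b), pi a >>> dmap D u = pi b) /\
  (forall (X : C) (x : forall a, Hom X (dob D a)),
      (forall a b (u : sHom a b), x a >>> dmap D u = x b) ->
      exists h : Hom X L, (forall a, h >>> pi a = x a) /\
        forall h' : Hom X L, (forall a, h' >>> pi a = x a) -> h' = h).

Definition is_colimit (J : SmallCategory) (C : Category) (D : Diagram J C)
  (L : C) (iota : forall a, Hom (dob D a) L) : Prop :=
  (forall a b (u : sHom a b), dmap D u >>> iota b = iota a) /\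
  (forall (X : C) (x : forall a, Hom (dob D a) X),
      (forall a b (u : sHom a b), dmap D u >>> x b = x a) ->
      exists h : Hom L X, (forall a, iota a >>> h = x a) /\
        forall h' : Hom L X, (forall a, iota a >>> h' = x a) -> h' = h).

Definition complete (C : Category) : Prop :=
  forall (J : SmallCategory) (D : Diagram J C),
    exists (L : C) (pi : forall a, Hom L (dob D a)), is_limit D L pi.

Definition cocomplete (C : Category) : Prop :=
  forall (J : SmallCategory) (D : Diagram J C),
    exists (L : C) (iota : forall a, Hom (dob D a) L), is_colimit D L iota.

Section Special.
Variable C : Category.

Definition is_initial (O : C) : Prop :=
  forall X : C, exists f : Hom O X, forall g : Hom O X, g = f.

Definition is_terminal (T : C) : Prop :=
  forall X : C, exists f : Hom X T, forall g : Hom X T, g = f.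

Definition is_iso (A B : C) (f : Hom A B) : Prop :=
  exists g : Hom B A, f >>> g = cid A /\ g >>> f = cid B.
Arguments is_iso {A B} f.

Definition is_coproduct (X Y S : C) (in1 : Hom X S) (in2 : Hom Y S) : Prop :=
  forall (Z : C) (f : Hom X Z) (g : Hom Y Z),
    exists h : Hom S Z, (in1 >>> h = f /\ in2 >>> h = g) /\
      forall h' : Hom S Z, in1 >>> h' = f -> in2 >>> h' = g -> h' = h.
Arguments is_coproduct {X Y S} in1 in2.

Definition is_pushout (A B D : C) (f : Hom A B) (g : Hom A D)
  (P : C) (p1 : Hom B P) (p2 : Hom D P) : Prop :=
  f >>> p1 = g >>> p2 /\
  forall (Z : C) (u : Hom B Z) (v : Hom D Z), f >>> u = g >>> v ->
    exists h : Hom P Z, (p1 >>> h = u /\ p2 >>> h = v) /\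
      forall h' : Hom P Z, p1 >>> h' = u -> p2 >>> h' = v -> h' = h.
Arguments is_pushout {A B D} f g {P} p1 p2.

Definition is_pullback (X Y Z : C) (f : Hom Y X) (g : Hom Z X)
  (Q : C) (q1 : Hom Q Y) (q2 : Hom Q Z) : Prop :=
  q1 >>> f = q2 >>> g /\
  forall (W : C) (u : Hom W Y) (v : Hom W Z), u >>> f = v >>> g ->
    exists h : Hom W Q, (h >>> q1 = u /\ h >>> q2 = v) /\
      forall h' : Hom W Q, h' >>> q1 = u -> h' >>> q2 = v -> h' = h.
Arguments is_pullback {X Y Z} f g {Q} q1 q2.

Definition llp (A B X Y : C) (i : Hom A B) (p : Hom X Y) : Prop :=
  forall (u : Hom A X) (v : Hom B Y), u >>> p = i >>> v ->
    exists h : Hom B X, i >>> h = u /\ h >>> p = v.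
Arguments llp {A B X Y} i p.

Definition rlp_class (I : MapClass C) : MapClass C :=
  fun X Y p => forall A B (i : Hom A B), I A B i -> llp i p.

Definition llp_class (I : MapClass C) : MapClass C :=
  fun A B i => forall X Y (p : Hom X Y), rlp_class I X Y p -> llp i p.

Definition fib_of (I : MapClass C) := rlp_class I.
Definition cof_of (I : MapClass C) := llp_class I.

(** [X] is P-fibrant: its (unique) map to a terminal object is in P
    (stated for every terminal object, they all being uniquely isomorphic). *)
Definition fibrant_wrt (P : MapClass C) (X : C) : Prop :=
  forall (T : C), is_terminal T -> forall t : Hom X T, P X T t.

Definition cofibrant_wrt (P : MapClass C) (X : C) : Prop :=
  forall (O : C), is_initial O -> forall o : Hom O X, P O X o.

Definition wfs (I : MapClass C) : Prop :=
  forall A B (f : Hom A B), exists (M : C) (g : Hom A M) (h : Hom M B),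
    g >>> h = f /\ cof_of I A M g /\ fib_of I M B h.

Section WMS.
Variables Cof Fib : MapClass C.

Definition cofibrant (X : C) := cofibrant_wrt Cof X.
Definition fibrant (X : C) := fibrant_wrt Fib X.

Definition acyclic_fib (X Y : C) (p : Hom X Y) : Prop :=
  Fib X Y p /\ forall A B (i : Hom A B), Cof A B i -> cofibrant A -> cofibrant B -> llp i p.
Arguments acyclic_fib {X Y} p.

Definition acyclic_cof (A B : C) (i : Hom A B) : Prop :=
  Cof A B i /\ forall X Y (p : Hom X Y), Fib X Y p -> fibrant X -> fibrant Y -> llp i p.
Arguments acyclic_cof {A B} i.

Definition cofibration_class_axioms : Prop :=
  (forall A B (f : Hom A B), is_iso f -> cofibrant A -> Cof A B f) /\
  (forall A B D (f : Hom A B) (g : Hom B D), Cof A B f -> Cof B D g -> Cof A D (f >>> g)) /\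
  (exists O : C, is_initial O) /\
  (forall O : C, is_initial O -> cofibrant O) /\
  (forall A B D (i : Hom A B) (f : Hom A D), Cof A B i -> cofibrant A -> cofibrant D ->
     (exists (P : C) (p1 : Hom B P) (p2 : Hom D P), is_pushout i f p1 p2) /\
     (forall (P : C) (p1 : Hom B P) (p2 : Hom D P), is_pushout i f p1 p2 -> Cof D P p2)).

Definition fibration_class_axioms : Prop :=
  (forall A B (f : Hom A B), is_iso f -> fibrant B -> Fib A B f) /\
  (forall A B D (f : Hom A B) (g : Hom B D), Fib A B f -> Fib B D g -> Fib A D (f >>> g)) /\
  (exists T : C, is_terminal T) /\
  (forall T : C, is_terminal T -> fibrant T) /\
  (forall X Y Z (p : Hom Y X) (f : Hom Z X), Fib Y X p -> fibrant X -> fibrant Z ->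
     (exists (Q : C) (q1 : Hom Q Y) (q2 : Hom Q Z), is_pullback p f q1 q2) /\
     (forall (Q : C) (q1 : Hom Q Y) (q2 : Hom Q Z), is_pullback p f q1 q2 -> Fib Q Z q2)).

Definition is_weak_model_structure : Prop :=
  cofibration_class_axioms /\ fibration_class_axioms /\
  (forall A X (f : Hom A X), cofibrant A -> fibrant X ->
     (exists (M : C) (i : Hom A M) (p : Hom M X),
         i >>> p = f /\ Cof A M i /\ acyclic_fib p) /\
     (exists (M : C) (i : Hom A M) (p : Hom M X),
         i >>> p = f /\ acyclic_cof i /\ Fib M X p)) /\
  (forall A B (i : Hom A B), Cof A B i -> cofibrant A -> fibrant B ->
     forall (P : C) (in1 in2 : Hom B P), is_pushout i i in1 in2 ->
     exists (Cyl : C) (c : Hom P Cyl) (q : Hom Cyl B),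
       in1 >>> (c >>> q) = cid B /\ in2 >>> (c >>> q) = cid B /\
       Cof P Cyl c /\ acyclic_cof (in1 >>> c)) /\
  (forall X Y (p : Hom Y X), Fib Y X p -> cofibrant Y -> fibrant X ->
     forall (Q : C) (pr1 pr2 : Hom Q Y), is_pullback p p pr1 pr2 ->
     exists (Pth : C) (s : Hom Y Pth) (q : Hom Pth Q),
       (s >>> q) >>> pr1 = cid Y /\ (s >>> q) >>> pr2 = cid Y /\
       Fib Pth Q q /\ acyclic_fib (q >>> pr1)).

End WMS.

End Special.
Arguments is_initial {C} O.
Arguments is_terminal {C} T.
Arguments llp {C A B X Y} i p.
Arguments is_iso {C A B} f.
Arguments is_coproduct {C X Y S} in1 in2.
Arguments is_pushout {C A B D} f g {P} p1 p2.
Arguments is_pullback {C X Y Z} f g {Q} q1 q2.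
Arguments rlp_class {C} I _ _ _.
Arguments llp_class {C} I _ _ _.
Arguments fib_of {C} I _ _ _.
Arguments cof_of {C} I _ _ _.
Arguments fibrant_wrt {C} P X.
Arguments cofibrant_wrt {C} P X.
Arguments wfs {C} I.
Arguments cofibrant {C} Cof X.
Arguments fibrant {C} Fib X.
Arguments acyclic_fib {C} Cof Fib {X Y} p.
Arguments acyclic_cof {C} Cof Fib {A B} i.
Arguments is_weak_model_structure {C} Cof Fib.

Record Endofunctor (C : Category) := {
  fobj :> C -> C;
  fmap : forall A B : C, Hom A B -> Hom (fobj A) (fobj B);
  fmap_id : forall A, fmap A A (cid A) = cid (fobj A);
  fmap_comp : forall A B D (f : Hom A B) (g : Hom B D),
      fmap A D (f >>> g) = fmap A B f >>> fmap B D g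
}.
Arguments fmap {_} _ {_ _} _.

Definition nat_from_id (C : Category) (F : Endofunctor C)
  (e : forall X : C, Hom X (F X)) : Prop :=
  forall X Y (f : Hom X Y), f >>> e Y = e X >>> fmap F f.

Definition is_left_adjoint (C : Category) (F : Endofunctor C) : Prop :=
  exists (G : Endofunctor C) (eta : forall X : C, Hom X (G (F X)))
         (eps : forall Y : C, Hom (F (G Y)) Y),
    (forall X X' (f : Hom X X'), f >>> eta X' = eta X >>> fmap G (fmap F f)) /\
    (forall Y Y' (g : Hom Y Y'), fmap F (fmap G g) >>> eps Y' = eps Y >>> g) /\
    (forall X, fmap F (eta X) >>> eps (F X) = cid (F X)) /\
    (forall Y, eta (G Y) >>> fmap G (eps Y) = cid (G Y)).

(** The map (B ⊔ B) ⊔_{A ⊔ A} CA -> CB induced by (e0,e1) and C(i), for i : A -> B: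
    for any choice of coproducts, pushout, and of the induced maps (all determined
    by their universal properties), the induced map [m] has property [Prop_]. *)
Definition boundary_map_has (C : Category) (F : Endofunctor C)
  (e0 e1 : forall X : C, Hom X (F X)) (A B : C) (i : Hom A B)
  (Prop_ : forall X Y : C, Hom X Y -> Prop) : Prop :=
  forall (SA : C) (a1 a2 : Hom A SA), is_coproduct a1 a2 ->
  forall (SB : C) (b1 b2 : Hom B SB), is_coproduct b1 b2 ->
  forall (u : Hom SA SB), a1 >>> u = i >>> b1 -> a2 >>> u = i >>> b2 ->
  forall (v : Hom SA (F A)), a1 >>> v = e0 A -> a2 >>> v = e1 A ->
  forall (P : C) (p1 : Hom SB P) (p2 : Hom (F A) P), is_pushout u v p1 p2 ->
  forall (m : Hom P (F B)),
    b1 >>> (p1 >>> m) = e0 B -> b2 >>> (p1 >>> m) = e1 B -> p2 >>> m = fmap F i ->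
    Prop_ P (F B) m.

Definition end_map_has (C : Category) (F : Endofunctor C)
  (e : forall X : C, Hom X (F X)) (A B : C) (i : Hom A B)
  (Prop_ : forall X Y : C, Hom X Y -> Prop) : Prop :=
  forall (P : C) (p1 : Hom B P) (p2 : Hom (F A) P), is_pushout i (e A) p1 p2 ->
  forall (m : Hom P (F B)), p1 >>> m = e B -> p2 >>> m = fmap F i ->
    Prop_ P (F B) m.

Definition llp_Jfib_fibrant (C : Category) (J : MapClass C) : MapClass C :=
  fun A B i => forall X Y (p : Hom X Y), fib_of J X Y p ->
    fibrant_wrt (fib_of J) X -> fibrant_wrt (fib_of J) Y -> llp i p.
Arguments boundary_map_has {C} F e0 e1 {A B} i Prop_.
Arguments end_map_has {C} F e {A B} i Prop_.
Arguments llp_Jfib_fibrant {C} J _ _ _.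

(* Main.v *)
Require Import Defs.
Set Implicit Arguments.

Section Basics.
Variable C : Category.
Implicit Types A B D X Y Z : C.

Lemma cA A B D E (f : Hom A B) (g : Hom B D) (h : Hom D E) :
  (f >>> g) >>> h = f >>> (g >>> h).
Proof. apply comp_assoc. Qed.
Lemma cidl A B (f : Hom A B) : cid A >>> f = f. Proof. apply comp_id_l. Qed.
Lemma cidr A B (f : Hom A B) : f >>> cid B = f. Proof. apply comp_id_r. Qed.

Lemma rw2 A B D E (f : Hom A B) (g : Hom B D) (h : Hom A D) (k : Hom D E) :
  f >>> g = h -> f >>> (g >>> k) = h >>> k.
Proof. intros H; rewrite <- cA, H; reflexivity. Qed.

Lemma rw2' A B D B' E (f : Hom A B) (g : Hom B D) (f' : Hom A B') (g' : Hom B' D) (k : Hom D E) :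
  f >>> g = f' >>> g' -> f >>> (g >>> k) = f' >>> (g' >>> k).
Proof. intros H; rewrite <- !cA, H; reflexivity. Qed.


Lemma init_uniq O X (HO : is_initial O) (f g : Hom O X) : f = g.
Proof. destruct (HO X) as [w Hw]. rewrite (Hw f), (Hw g). reflexivity. Qed.
Lemma term_uniq T X (HT : is_terminal T) (f g : Hom X T) : f = g.
Proof. destruct (HT X) as [w Hw]. rewrite (Hw f), (Hw g). reflexivity. Qed.

Lemma cof_init_init (I : MapClass C) O X (o : Hom O X) :
  is_initial O -> is_initial X -> cof_of I O X o.
Proof.
  intros HO HX U V p _ u v Hsq.
  destruct (HX U) as [w Hw]. exists w. split; apply init_uniq; assumption.
Qed.

Lemma fib_term_term (I : MapClass C) T X (t : Hom X T) :
  is_terminal T -> is_terminal X -> fib_of I X T t.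
Proof.
  intros HT HX U V i _ u v Hsq.
  destruct (HX V) as [w Hw]. exists w. split; apply term_uniq; assumption.
Qed.

Lemma cof_iso (I : MapClass C) A B (f : Hom A B) : is_iso f -> cof_of I A B f.
Proof.
  intros [g [H1 H2]] U V p _ u v Hsq. exists (g >>> u). split.
  - rewrite <- cA, H1, cidl. reflexivity.
  - rewrite cA, Hsq, <- cA, H2, cidl. reflexivity.
Qed.

Lemma fib_iso (I : MapClass C) A B (f : Hom A B) : is_iso f -> fib_of I A B f.
Proof.
  intros [g [H1 H2]] U V i _ u v Hsq. exists (v >>> g). split.
  - rewrite <- cA, <- Hsq, cA, H1, cidr. reflexivity.
  - rewrite cA, H2, cidr. reflexivity.
Qed.

Lemma cof_comp (I : MapClass C) A B D (f : Hom A B) (g : Hom B D) :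
  cof_of I A B f -> cof_of I B D g -> cof_of I A D (f >>> g).
Proof.
  intros Hf Hg U V p Hp u v Hsq.
  destruct (Hf U V p Hp u (g >>> v)) as [k [Hk1 Hk2]]. { rewrite Hsq, cA. reflexivity. }
  destruct (Hg U V p Hp k v) as [h [Hh1 Hh2]]. { rewrite Hk2. reflexivity. }
  exists h. split; [rewrite cA, Hh1|]; assumption.
Qed.

Lemma fib_comp (I : MapClass C) A B D (f : Hom A B) (g : Hom B D) :
  fib_of I A B f -> fib_of I B D g -> fib_of I A D (f >>> g).
Proof.
  intros Hf Hg U V i Hi u v Hsq.
  destruct (Hg U V i Hi (u >>> f) v) as [k [Hk1 Hk2]]. { rewrite cA, Hsq. reflexivity. }
  destruct (Hf U V i Hi u k) as [h [Hh1 Hh2]]. { rewrite Hk1. reflexivity. }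
  exists h. split; [|rewrite <- cA, Hh2]; assumption.
Qed.

Lemma pushout_ext A B D (f : Hom A B) (g : Hom A D) P (p1 : Hom B P) (p2 : Hom D P)
  (H : is_pushout f g p1 p2) Z (h h' : Hom P Z) :
  p1 >>> h = p1 >>> h' -> p2 >>> h = p2 >>> h' -> h = h'.
Proof.
  intros E1 E2. destruct H as [Hc Hu].
  destruct (Hu Z (p1 >>> h) (p2 >>> h)) as [k [_ Hk]].
  { rewrite <- !cA, Hc. reflexivity. }
  rewrite (Hk h eq_refl eq_refl), (Hk h' (eq_sym E1) (eq_sym E2)). reflexivity.
Qed.

Lemma pullback_ext X Y Z (f : Hom Y X) (g : Hom Z X) Q (q1 : Hom Q Y) (q2 : Hom Q Z)
  (H : is_pullback f g q1 q2) W (h h' : Hom W Q) :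
  h >>> q1 = h' >>> q1 -> h >>> q2 = h' >>> q2 -> h = h'.
Proof.
  intros E1 E2. destruct H as [Hc Hu].
  destruct (Hu W (h >>> q1) (h >>> q2)) as [k [_ Hk]].
  { rewrite !cA, Hc. reflexivity. }
  rewrite (Hk h eq_refl eq_refl), (Hk h' (eq_sym E1) (eq_sym E2)). reflexivity.
Qed.

Lemma coprod_ext X Y S (i1 : Hom X S) (i2 : Hom Y S) (H : is_coproduct i1 i2) Z (h h' : Hom S Z) :
  i1 >>> h = i1 >>> h' -> i2 >>> h = i2 >>> h' -> h = h'.
Proof.
  intros E1 E2. destruct (H Z (i1 >>> h) (i2 >>> h)) as [k [_ Hk]].
  rewrite (Hk h eq_refl eq_refl), (Hk h' (eq_sym E1) (eq_sym E2)). reflexivity.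
Qed.

Lemma pushout_sym A B D (f : Hom A B) (g : Hom A D) P (p1 : Hom B P) (p2 : Hom D P) :
  is_pushout f g p1 p2 -> is_pushout g f p2 p1.
Proof.
  intros [Hc Hu]. split; [symmetry; exact Hc|].
  intros Z u v E. destruct (Hu Z v u (eq_sym E)) as [h [[h1 h2] hu]].
  exists h. split; [split; assumption|]. intros h' e1 e2. apply hu; assumption.
Qed.

Lemma pullback_sym X Y Z (f : Hom Y X) (g : Hom Z X) Q (q1 : Hom Q Y) (q2 : Hom Q Z) :
  is_pullback f g q1 q2 -> is_pullback g f q2 q1.
Proof.
  intros [Hc Hu]. split; [symmetry; exact Hc|].
  intros W u v E. destruct (Hu W v u (eq_sym E)) as [h [[h1 h2] hu]].
  exists h. split; [split; assumption|]. intros h' e1 e2. apply hu; assumption.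
Qed.

Lemma cof_pushout (I : MapClass C) A B D (f : Hom A B) (g : Hom A D) P (p1 : Hom B P) (p2 : Hom D P) :
  is_pushout f g p1 p2 -> cof_of I A B f -> cof_of I D P p2.
Proof.
  intros HP Hf U V p Hp u v Hsq.
  destruct (Hf U V p Hp (g >>> u) (p1 >>> v)) as [k [Hk1 Hk2]].
  { rewrite cA, Hsq, <- !cA, (proj1 HP). reflexivity. }
  destruct (proj2 HP U k u Hk1) as [h [[h1 h2] _]].
  exists h. split; [assumption|].
  apply (pushout_ext HP).
  - rewrite <- cA, h1. assumption.
  - rewrite <- cA, h2. assumption.
Qed.

Lemma fib_pullback (I : MapClass C) X Y Z (f : Hom Y X) (g : Hom Z X) Q (q1 : Hom Q Y) (q2 : Hom Q Z) :
  is_pullback f g q1 q2 -> fib_of I Y X f -> fib_of I Q Z q2.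
Proof.
  intros HP Hf U V i Hi u v Hsq.
  destruct (Hf U V i Hi (u >>> q1) (v >>> g)) as [k [Hk1 Hk2]].
  { rewrite cA, (proj1 HP), <- !cA, Hsq. reflexivity. }
  destruct (proj2 HP V k v Hk2) as [h [[h1 h2] _]].
  exists h. split; [|assumption].
  apply (pullback_ext HP).
  - rewrite cA, h1. exact Hk1.
  - rewrite cA, h2. symmetry; exact Hsq.
Qed.

Lemma rlp_llp (I : MapClass C) A B (i : Hom A B) X Y (p : Hom X Y) :
  cof_of I A B i -> fib_of I X Y p -> llp i p.
Proof. intros Hi Hp. apply Hi, Hp. Qed.

Lemma gen_cof (I : MapClass C) A B (i : Hom A B) : I A B i -> cof_of I A B i.
Proof. intros Hi X Y p Hp. apply Hp, Hi. Qed.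

End Basics.

Set Implicit Arguments.

Definition HT (t : bool) : Set := if t then unit else Empty_set.
Lemma HT_true (t : bool) : HT t -> t = true.
Proof. destruct t; [reflexivity| intros []]. Qed.
Definition HT_of (t : bool) (H : t = true) : HT t :=
  match eq_sym H in _ = t' return HT t' with eq_refl => tt end.
Lemma HT_eq (t : bool) (x y : HT t) : x = y.
Proof. destruct t; [destruct x, y; reflexivity | destruct x]. Qed.

Section PCat.
Variable T : Set.
Variable R : T -> T -> bool.
Hypothesis Rrefl : forall a, R a a = true.
Hypothesis Rtrans : forall a b c, R a b = true -> R b c = true -> R a c = true.

Definition PCat : SmallCategory.
Proof.
  refine (@Build_SmallCategory T (fun a b => HT (R a b))
            (fun a => @HT_of _ (Rrefl a))
            (fun a b c f g => @HT_of _ (Rtrans (@HT_true _ f) (@HT_true _ g))) _ _ _);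
  intros; apply HT_eq.
Defined.
End PCat.

Inductive S3 : Set := sa | sb | sc.
Definition Rsp (x y : S3) : bool :=
  match x, y with sc, _ => true | sa, sa => true | sb, sb => true | _, _ => false end.
Lemma Rsp_refl a : Rsp a a = true. Proof. destruct a; reflexivity. Qed.
Lemma Rsp_trans a b c : Rsp a b = true -> Rsp b c = true -> Rsp a c = true.
Proof. destruct a, b, c; simpl; congruence. Qed.
Definition SpanCat := PCat Rsp Rsp_refl Rsp_trans.
Definition Rcs (x y : S3) : bool := Rsp y x.
Lemma Rcs_refl a : Rcs a a = true. Proof. destruct a; reflexivity. Qed.
Lemma Rcs_trans a b c : Rcs a b = true -> Rcs b c = true -> Rcs a c = true.
Proof. unfold Rcs; destruct a, b, c; simpl; congruence. Qed.
Definition CospanCat := PCat Rcs Rcs_refl Rcs_trans.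
Definition Rd (x y : bool) : bool := match x, y with true, true => true | false, false => true | _, _ => false end.
Lemma Rd_refl a : Rd a a = true. Proof. destruct a; reflexivity. Qed.
Lemma Rd_trans a b c : Rd a b = true -> Rd b c = true -> Rd a c = true.
Proof. destruct a, b, c; simpl; congruence. Qed.
Definition DiscCat := PCat Rd Rd_refl Rd_trans.
Definition Re (x y : Empty_set) : bool := match x with end.
Lemma Re_refl a : Re a a = true. Proof. destruct a. Qed.
Lemma Re_trans a b c : Re a b = true -> Re b c = true -> Re a c = true.
Proof. destruct a. Qed.
Definition EmptyCat := PCat Re Re_refl Re_trans.

Section Shapes.
Variable C : Category.

Definition empty_diag : Diagram EmptyCat C.
Proof.
  refine (@Build_Diagram EmptyCat C (fun a => match a with end) (fun a => match a with end) _ _);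
  intros a; destruct a.
Defined.

Lemma initial_exists : cocomplete C -> exists O : C, is_initial O.
Proof.
  intros H. destruct (H _ empty_diag) as [L [io [_ Hu]]].
  exists L. intros X.
  destruct (Hu X (fun a => match a with end) (fun a => match a with end)) as [h [_ Hh]].
  exists h. intros g. apply Hh. intros a; destruct a.
Qed.

Lemma terminal_exists : complete C -> exists T : C, is_terminal T.
Proof.
  intros H. destruct (H _ empty_diag) as [L [io [_ Hu]]].
  exists L. intros X.
  destruct (Hu X (fun a => match a with end) (fun a => match a with end)) as [h [_ Hh]].
  exists h. intros g. apply Hh. intros a; destruct a.
Qed.

Section Span.
Variables (A B D : C) (f : Hom A B) (g : Hom A D).
Definition span_ob (x : S3) : C := match x with sa => B | sb => D | sc => A end.
Definition span_map (x y : S3) : sHom (s:=SpanCat) x y -> Hom (span_ob x) (span_ob y) :=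
  match x, y return sHom (s:=SpanCat) x y -> Hom (span_ob x) (span_ob y) with
  | sa, sa => fun _ => cid _
  | sb, sb => fun _ => cid _
  | sc, sc => fun _ => cid _
  | sc, sa => fun _ => f
  | sc, sb => fun _ => g
  | sa, sb => fun e => match e with end
  | sa, sc => fun e => match e with end
  | sb, sa => fun e => match e with end
  | sb, sc => fun e => match e with end
  end.
Definition span_diag : Diagram SpanCat C.
Proof.
  refine (@Build_Diagram SpanCat C span_ob span_map _ _).
  - intros a; destruct a; reflexivity.
  - intros a b c u v; destruct a, b, c; simpl in *;
    try destruct u; try destruct v; simpl; rewrite ?cidl, ?cidr; reflexivity.
Defined.

Lemma pushout_exists : cocomplete C -> exists P (p1 : Hom B P) (p2 : Hom D P), is_pushout f g p1 p2.
Proof.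
  intros H. destruct (H _ span_diag) as [L [io [Hc Hu]]].
  exists L, (io sa), (io sb).
  pose proof (Hc sc sa tt) as E1. pose proof (Hc sc sb tt) as E2. simpl in E1, E2.
  unfold is_pushout; simpl.
  split. { rewrite E1, E2; reflexivity. }
  intros Z u v E.
  pose (x := fun a : S3 => match a return Hom (span_ob a) Z with sa => u | sb => v | sc => f >>> u end).
  destruct (Hu Z x) as [h [Hh1 Hh2]].
  { intros a b w; destruct a, b; simpl in *; try destruct w; simpl; rewrite ?cidl; auto. }
  exists h. split. { split; [exact (Hh1 sa) | exact (Hh1 sb)]. }
  intros h' e1 e2. apply Hh2. intros a; destruct a; simpl; auto.
  rewrite <- E1, cA, e1. reflexivity.
Qed.
End Span.

Section Cospan.
Variables (X Y Z : C) (f : Hom Y X) (g : Hom Z X).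
Definition cospan_ob (x : S3) : C := match x with sa => Y | sb => Z | sc => X end.
Definition cospan_map (x y : S3) : sHom (s:=CospanCat) x y -> Hom (cospan_ob x) (cospan_ob y) :=
  match x, y return sHom (s:=CospanCat) x y -> Hom (cospan_ob x) (cospan_ob y) with
  | sa, sa => fun _ => cid _
  | sb, sb => fun _ => cid _
  | sc, sc => fun _ => cid _
  | sa, sc => fun _ => f
  | sb, sc => fun _ => g
  | sa, sb => fun e => match e with end
  | sc, sa => fun e => match e with end
  | sb, sa => fun e => match e with end
  | sc, sb => fun e => match e with end
  end.
Definition cospan_diag : Diagram CospanCat C.
Proof.
  refine (@Build_Diagram CospanCat C cospan_ob cospan_map _ _).
  - intros a; destruct a; reflexivity.
  - intros a b c u v; destruct a, b, c; simpl in *;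
    try destruct u; try destruct v; simpl; rewrite ?cidl, ?cidr; reflexivity.
Defined.

Lemma pullback_exists : complete C -> exists Q (q1 : Hom Q Y) (q2 : Hom Q Z), is_pullback f g q1 q2.
Proof.
  intros H. destruct (H _ cospan_diag) as [L [pi [Hc Hu]]].
  exists L, (pi sa), (pi sb).
  pose proof (Hc sa sc tt) as E1. pose proof (Hc sb sc tt) as E2. simpl in E1, E2.
  unfold is_pullback; simpl.
  split. { rewrite E1, E2; reflexivity. }
  intros W u v E.
  pose (x := fun a : S3 => match a return Hom W (cospan_ob a) with sa => u | sb => v | sc => u >>> f end).
  destruct (Hu W x) as [h [Hh1 Hh2]].
  { intros a b w; destruct a, b; simpl in *; try destruct w; simpl; rewrite ?cidr; auto. }
  exists h. split. { split; [exact (Hh1 sa) | exact (Hh1 sb)]. }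
  intros h' e1 e2. apply Hh2. intros a; destruct a; simpl; auto.
  rewrite <- E1, <- cA, e1. reflexivity.
Qed.
End Cospan.

Section Coprod.
Variables (X Y : C).
Definition disc_ob (x : bool) : C := if x then X else Y.
Definition disc_map (x y : bool) : sHom (s:=DiscCat) x y -> Hom (disc_ob x) (disc_ob y) :=
  match x, y return sHom (s:=DiscCat) x y -> Hom (disc_ob x) (disc_ob y) with
  | true, true => fun _ => cid _
  | false, false => fun _ => cid _
  | true, false => fun e => match e with end
  | false, true => fun e => match e with end
  end.
Definition disc_diag : Diagram DiscCat C.
Proof.
  refine (@Build_Diagram DiscCat C disc_ob disc_map _ _).
  - intros a; destruct a; reflexivity.
  - intros a b c u v; destruct a, b, c; simpl in *;
    try destruct u; try destruct v; simpl; rewrite ?cidl, ?cidr; reflexivity.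
Defined.

Lemma coproduct_exists : cocomplete C -> exists S (i1 : Hom X S) (i2 : Hom Y S), is_coproduct i1 i2.
Proof.
  intros H. destruct (H _ disc_diag) as [L [io [Hc Hu]]].
  exists L, (io true), (io false).
  intros Z u v.
  pose (x := fun a : bool => match a return Hom (disc_ob a) Z with true => u | false => v end).
  destruct (Hu Z x) as [h [Hh1 Hh2]].
  { intros a b w; destruct a, b; simpl in *; try destruct w; simpl; rewrite ?cidl; auto. }
  exists h. split. { split; [exact (Hh1 true) | exact (Hh1 false)]. }
  intros h' e1 e2. apply Hh2. intros a; destruct a; simpl; auto.
Qed.
End Coprod.
End Shapes.

Set Implicit Arguments.

Lemma rwA2 {C : Category} {A B D E : C} {f : Hom A B} {g : Hom B D} {h : Hom A D} (k : Hom D E) :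
  f >>> g = h -> f >>> (g >>> k) = h >>> k.
Proof. intros H; rewrite <- comp_assoc, H; reflexivity. Qed.
Lemma rwA3 {C : Category} {A B D E F : C} {f : Hom A B} {g : Hom B D} {g2 : Hom D E} {h : Hom A E} (k : Hom E F) :
  f >>> (g >>> g2) = h -> f >>> (g >>> (g2 >>> k)) = h >>> k.
Proof. intros H; rewrite <- (comp_assoc _ _ _ _ _ g g2 k), <- comp_assoc, H; reflexivity. Qed.
Lemma rwA4 {C : Category} {A B D E F G : C} {f : Hom A B} {g : Hom B D} {g2 : Hom D E} {g3 : Hom E F} {h : Hom A F} (k : Hom F G) :
  f >>> (g >>> (g2 >>> g3)) = h -> f >>> (g >>> (g2 >>> (g3 >>> k))) = h >>> k.
Proof. intros H. rewrite <- (comp_assoc _ _ _ _ _ g2 g3 k). apply rwA3. exact H. Qed.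

Ltac nrm := repeat rewrite comp_assoc.
Ltac rwa H := nrm; first [ rewrite (rwA4 _ H) | rewrite (rwA3 _ H) | rewrite (rwA2 _ H) | rewrite H ]; nrm.
Ltac rwa_in H H' := nrm; rewrite ?comp_assoc in H';
  first [ rewrite (rwA4 _ H) in H' | rewrite (rwA3 _ H) in H' | rewrite (rwA2 _ H) in H' | rewrite H in H' ];
  rewrite ?comp_assoc in H'.

Section Adj.
Variable C : Category.
Variables (F G : Endofunctor C).
Variables (eta : forall X : C, Hom X (G (F X))) (eps : forall Y : C, Hom (F (G Y)) Y).
Hypothesis eta_nat : forall X X' (f : Hom X X'), f >>> eta X' = eta X >>> fmap G (fmap F f).
Hypothesis eps_nat : forall Y Y' (g : Hom Y Y'), fmap F (fmap G g) >>> eps Y' = eps Y >>> g.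
Hypothesis tri1 : forall X, fmap F (eta X) >>> eps (F X) = cid (F X).
Hypothesis tri2 : forall Y, eta (G Y) >>> fmap G (eps Y) = cid (G Y).

Definition flat {W Y : C} (f : Hom (F W) Y) : Hom W (G Y) := eta W >>> fmap G f.
Definition sharp {W Y : C} (g : Hom W (G Y)) : Hom (F W) Y := fmap F g >>> eps Y.

Lemma sharp_flat W Y (f : Hom (F W) Y) : sharp (flat f) = f.
Proof.
  unfold sharp, flat. rewrite fmap_comp, comp_assoc, eps_nat, <- comp_assoc, tri1, comp_id_l.
  reflexivity.
Qed.
Lemma flat_sharp W Y (g : Hom W (G Y)) : flat (sharp g) = g.
Proof.
  unfold sharp, flat. rewrite fmap_comp, <- comp_assoc, <- eta_nat, comp_assoc, tri2, comp_id_r.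
  reflexivity.
Qed.
Lemma flat_natl W W' Y (k : Hom W' W) (f : Hom (F W) Y) : flat (fmap F k >>> f) = k >>> flat f.
Proof. unfold flat. rewrite fmap_comp, <- comp_assoc, <- eta_nat, comp_assoc. reflexivity. Qed.
Lemma flat_natr W Y Y' (f : Hom (F W) Y) (y : Hom Y Y') : flat (f >>> y) = flat f >>> fmap G y.
Proof. unfold flat. rewrite fmap_comp, comp_assoc. reflexivity. Qed.
Lemma sharp_natl W W' Y (k : Hom W' W) (g : Hom W (G Y)) : sharp (k >>> g) = fmap F k >>> sharp g.
Proof. unfold sharp. rewrite fmap_comp, comp_assoc. reflexivity. Qed.
Lemma sharp_natr W Y Y' (g : Hom W (G Y)) (y : Hom Y Y') : sharp (g >>> fmap G y) = sharp g >>> y.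
Proof. unfold sharp. rewrite fmap_comp, comp_assoc, eps_nat, comp_assoc. reflexivity. Qed.
Lemma flat_inj W Y (f f' : Hom (F W) Y) : flat f = flat f' -> f = f'.
Proof. intros H. rewrite <- (sharp_flat _ _ f), <- (sharp_flat _ _ f'), H. reflexivity. Qed.
Lemma sharp_inj W Y (g g' : Hom W (G Y)) : sharp g = sharp g' -> g = g'.
Proof. intros H. rewrite <- (flat_sharp _ _ g), <- (flat_sharp _ _ g'), H. reflexivity. Qed.

Definition ev (e : forall X : C, Hom X (F X)) (X : C) : Hom (G X) X := e (G X) >>> eps X.
Section E.
Variable e : forall X : C, Hom X (F X).
Hypothesis He : nat_from_id F e.
Lemma ev_nat X Y (f : Hom X Y) : fmap G f >>> ev e Y = ev e X >>> f.
Proof.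
  unfold ev. rewrite <- comp_assoc, He, comp_assoc, eps_nat, comp_assoc. reflexivity.
Qed.
Lemma e_sharp W Y (g : Hom W (G Y)) : e W >>> sharp g = g >>> ev e Y.
Proof. unfold sharp, ev. rewrite <- comp_assoc, <- He, comp_assoc. reflexivity. Qed.

Definition V1 {A B X Y : C} (i : Hom A B) (p : Hom X Y) : Prop :=
  forall (a : Hom A (G X)) (b : Hom B (G Y)) (x : Hom B X),
    a >>> fmap G p = i >>> b -> a >>> ev e X = i >>> x -> b >>> ev e Y = x >>> p ->
    exists h : Hom B (G X), i >>> h = a /\ h >>> fmap G p = b /\ h >>> ev e X = x.

Lemma trans_end A B (i : Hom A B) X Y (p : Hom X Y) :
  cocomplete C -> end_map_has F e i (fun _ _ m => llp m p) -> V1 i p.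
Proof.
  intros Hcc Hend a b x E1 E2 E3.
  destruct (pushout_exists _ _ _ i (e A) Hcc) as [P [p1 [p2 HP]]].
  destruct (proj2 HP (F B) (e B) (fmap F i)) as [m [[m1 m2] _]]. { apply He. }
  destruct (proj2 HP X x (sharp a)) as [t [[t1 t2] _]]. { rewrite e_sharp. symmetry; exact E2. }
  destruct (Hend P p1 p2 HP m m1 m2 t (sharp b)) as [k [k1 k2]].
  { apply (pushout_ext HP).
    - rwa t1. rwa m1. rewrite e_sharp. symmetry; exact E3.
    - rwa t2. rwa m2. rewrite <- sharp_natr, E1, sharp_natl. reflexivity. }
  exists (flat k). split; [|split].
  - rewrite <- flat_natl, <- m2, comp_assoc, k1, t2, flat_sharp. reflexivity.
  - rewrite <- flat_natr, k2, flat_sharp. reflexivity.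
  - rewrite <- e_sharp, sharp_flat, <- m1, comp_assoc, k1, t1. reflexivity.
Qed.

End E.
Variables (e0 e1 : forall X : C, Hom X (F X)).
Hypotheses (He0 : nat_from_id F e0) (He1 : nat_from_id F e1).

Definition V2 {A B X Y : C} (i : Hom A B) (p : Hom X Y) : Prop :=
  forall (a : Hom A (G X)) (b : Hom B (G Y)) (x0 x1 : Hom B X),
    a >>> fmap G p = i >>> b -> a >>> ev e0 X = i >>> x0 -> a >>> ev e1 X = i >>> x1 ->
    b >>> ev e0 Y = x0 >>> p -> b >>> ev e1 Y = x1 >>> p ->
    exists h : Hom B (G X), i >>> h = a /\ h >>> fmap G p = b /\
      h >>> ev e0 X = x0 /\ h >>> ev e1 X = x1.

Lemma trans_bd A B (i : Hom A B) X Y (p : Hom X Y) :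
  cocomplete C -> boundary_map_has F e0 e1 i (fun _ _ m => llp m p) -> V2 i p.
Proof.
  intros Hcc Hbd a b x0 x1 E1 E2 E3 E4 E5.
  destruct (coproduct_exists A A Hcc) as [SA [a1 [a2 HSA]]].
  destruct (coproduct_exists B B Hcc) as [SB [b1 [b2 HSB]]].
  destruct (HSA SB (i >>> b1) (i >>> b2)) as [u [[u1 u2] _]].
  destruct (HSA (F A) (e0 A) (e1 A)) as [v [[v1 v2] _]].
  destruct (pushout_exists _ _ _ u v Hcc) as [P [p1 [p2 HP]]].
  destruct (HSB (F B) (e0 B) (e1 B)) as [mB [[mB1 mB2] _]].
  destruct (proj2 HP (F B) mB (fmap F i)) as [m [[m1 m2] _]].
  { apply (coprod_ext HSA).
    - rwa u1. rwa mB1. rwa v1. apply He0.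
    - rwa u2. rwa mB2. rwa v2. apply He1. }
  destruct (HSB X x0 x1) as [xB [[xB1 xB2] _]].
  destruct (proj2 HP X xB (sharp a)) as [t [[t1 t2] _]].
  { apply (coprod_ext HSA).
    - rwa u1. rwa xB1. rwa v1. rewrite (e_sharp He0). symmetry; exact E2.
    - rwa u2. rwa xB2. rwa v2. rewrite (e_sharp He1). symmetry; exact E3. }
  assert (Hm1 : b1 >>> (p1 >>> m) = e0 B) by (rwa m1; exact mB1).
  assert (Hm2 : b2 >>> (p1 >>> m) = e1 B) by (rwa m1; exact mB2).
  destruct (Hbd SA a1 a2 HSA SB b1 b2 HSB u u1 u2 v v1 v2 P p1 p2 HP m Hm1 Hm2 m2 t (sharp b))
    as [k [k1 k2]].
  { apply (pushout_ext HP).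
    - rwa t1. rwa m1. apply (coprod_ext HSB).
      + rwa xB1. rwa mB1. rewrite (e_sharp He0). symmetry; exact E4.
      + rwa xB2. rwa mB2. rewrite (e_sharp He1). symmetry; exact E5.
    - rwa t2. rwa m2. rewrite <- sharp_natr, E1, sharp_natl. reflexivity. }
  exists (flat k). split; [|split; [|split]].
  - rewrite <- flat_natl, <- m2, comp_assoc, k1, t2, flat_sharp. reflexivity.
  - rewrite <- flat_natr, k2, flat_sharp. reflexivity.
  - rewrite <- (e_sharp He0), sharp_flat, <- Hm1. rwa k1. rwa t1. exact xB1.
  - rewrite <- (e_sharp He1), sharp_flat, <- Hm2. rwa k1. rwa t1. exact xB2.
Qed.

Lemma ext1 (K : MapClass C) e (He : nat_from_id F e) X Y (p : Hom X Y) :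
  complete C -> (forall A B (i : Hom A B), K A B i -> V1 e i p) ->
  forall A B (i : Hom A B), cof_of K A B i -> V1 e i p.
Proof.
  intros Hc HK.
  destruct (pullback_exists _ _ _ (ev e Y) p Hc) as [P1 [pi1 [pi2 HP]]].
  destruct (proj2 HP (G X) (fmap G p) (ev e X)) as [rho [[r1 r2] _]]. { apply (ev_nat He). }
  assert (Hrho : fib_of K (G X) P1 rho).
  { intros A B i Hi al be Hsq.
    destruct (HK A B i Hi al (be >>> pi1) (be >>> pi2)) as [h [h1 [h2 h3]]].
    - rewrite <- r1, <- comp_assoc, Hsq, comp_assoc. reflexivity.
    - rewrite <- r2, <- comp_assoc, Hsq, comp_assoc. reflexivity.
    - rewrite comp_assoc, (proj1 HP). nrm. reflexivity.
    - exists h. split; [exact h1|]. apply (pullback_ext HP).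
      + rwa r1. exact h2.
      + rwa r2. exact h3. }
  intros A B i Hi a b x E1 E2 E3.
  destruct (proj2 HP B b x E3) as [be [[be1 be2] _]].
  destruct (Hi _ _ rho Hrho a be) as [h [h1 h2]].
  { apply (pullback_ext HP).
    - rwa r1. rwa be1. exact E1.
    - rwa r2. rwa be2. exact E2. }
  exists h. split; [exact h1|split].
  - rewrite <- r1. rwa h2. exact be1.
  - rewrite <- r2. rwa h2. exact be2.
Qed.

Lemma ext2 (K : MapClass C) X Y (p : Hom X Y) :
  complete C -> (forall A B (i : Hom A B), K A B i -> V2 i p) ->
  forall A B (i : Hom A B), cof_of K A B i -> V2 i p.
Proof.
  intros Hc HK.
  destruct (pullback_exists _ _ _ (ev e0 Y) p Hc) as [P1 [pi1 [pi2 HP]]].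
  destruct (pullback_exists _ _ _ (pi1 >>> ev e1 Y) p Hc) as [P2 [ro1 [ro2 HQ]]].
  destruct (proj2 HP (G X) (fmap G p) (ev e0 X)) as [rho [[r1 r2] _]]. { apply (ev_nat He0). }
  destruct (proj2 HQ (G X) rho (ev e1 X)) as [sig [[s1 s2] _]].
  { rwa r1. apply (ev_nat He1). }
  assert (Hsig : fib_of K (G X) P2 sig).
  { intros A B i Hi al be Hsq.
    destruct (HK A B i Hi al (be >>> (ro1 >>> pi1)) (be >>> (ro1 >>> pi2)) (be >>> ro2))
      as [h [h1 [h2 [h3 h4]]]].
    - rewrite <- r1, <- s1. nrm. rewrite <- (comp_assoc _ _ _ _ _ al sig), Hsq. nrm. reflexivity.
    - rewrite <- r2, <- s1. nrm. rewrite <- (comp_assoc _ _ _ _ _ al sig), Hsq. nrm. reflexivity.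
    - rewrite <- s2. nrm. rewrite <- (comp_assoc _ _ _ _ _ al sig), Hsq. nrm. reflexivity.
    - nrm. rwa (proj1 HP). reflexivity.
    - nrm. rwa (proj1 HQ). reflexivity.
    - exists h. split; [exact h1|]. apply (pullback_ext HQ).
      + apply (pullback_ext HP).
        * rwa s1. rwa r1. exact h2.
        * rwa s1. rwa r2. exact h3.
      + rwa s2. exact h4. }
  intros A B i Hi a b x0 x1 E1 E2 E3 E4 E5.
  destruct (proj2 HP B b x0 E4) as [be [[be1 be2] _]].
  destruct (proj2 HQ B be x1) as [ga [[ga1 ga2] _]]. { rwa be1. exact E5. }
  destruct (Hi _ _ sig Hsig a ga) as [h [h1 h2]].
  { apply (pullback_ext HQ).
    - apply (pullback_ext HP).
      + rwa s1. rwa r1. rwa ga1. rwa be1. exact E1.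
      + rwa s1. rwa r2. rwa ga1. rwa be2. exact E2.
    - rwa s2. rwa ga2. exact E3. }
  exists h. split; [exact h1|split; [|split]].
  - rewrite <- r1, <- s1. rwa h2. rwa ga1. exact be1.
  - rewrite <- r2, <- s1. rwa h2. rwa ga1. exact be2.
  - rewrite <- s2. rwa h2. exact ga2.
Qed.

Lemma GT_uniq T (HT : is_terminal T) W (f g : Hom W (G T)) : f = g.
Proof. apply sharp_inj. apply term_uniq. exact HT. Qed.
Lemma GT_ex T (HT : is_terminal T) W : exists f : Hom W (G T), True.
Proof. destruct (HT (F W)) as [t _]. exists (flat t). exact I. Qed.

Lemma mkH B Z (j : Hom B Z) (r : Hom Z B) (jr : j >>> r = cid B)
  (sg : Hom B (G B)) (sg0 : sg >>> ev e0 B = cid B) :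
  V2 j r ->
  exists H : Hom Z (G Z), j >>> H = sg >>> fmap G j /\ H >>> fmap G r = r >>> sg /\
    H >>> ev e0 Z = cid Z /\ H >>> ev e1 Z = r >>> (sg >>> (ev e1 B >>> j)).
Proof.
  intros HV.
  destruct (HV (sg >>> fmap G j) (r >>> sg) (cid Z) (r >>> (sg >>> (ev e1 B >>> j)))) as [H [h1 [h2 [h3 h4]]]].
  - rewrite comp_assoc, <- fmap_comp, jr, fmap_id, comp_id_r. rwa jr. rewrite comp_id_l. reflexivity.
  - rewrite comp_id_r. rewrite comp_assoc, (ev_nat He0). rwa sg0. apply comp_id_l.
  - rewrite comp_assoc, (ev_nat He1). rwa jr. rewrite comp_id_l. reflexivity.
  - rewrite comp_id_l. rwa sg0. apply comp_id_r.
  - nrm. f_equal. f_equal. rwa jr. rewrite comp_id_r. reflexivity.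
  - exists H. auto.
Qed.

Variables (I J : MapClass C).
Hypotheses (Hcomplete : complete C) (Hcocomplete : cocomplete C).
Hypothesis HJI : forall A B (j : Hom A B), J A B j -> cof_of I A B j.
Hypothesis H3 : forall A B (i : Hom A B), I A B i -> boundary_map_has F e0 e1 i (cof_of I).
Hypothesis H4_0 : forall A B (i : Hom A B), I A B i -> end_map_has F e0 i (llp_Jfib_fibrant J).
Hypothesis H4_1 : forall A B (i : Hom A B), I A B i -> end_map_has F e1 i (llp_Jfib_fibrant J).
Hypothesis H5 : forall A B (j : Hom A B), J A B j -> boundary_map_has F e0 e1 j (llp_Jfib_fibrant J).

Lemma fib_IJ X Y (p : Hom X Y) : fib_of I X Y p -> fib_of J X Y p.
Proof. intros Hp A B j Hj. apply (HJI Hj). exact Hp. Qed.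
Lemma cof_JI A B (i : Hom A B) : cof_of J A B i -> cof_of I A B i.
Proof. intros Hi X Y p Hp. apply Hi, fib_IJ, Hp. Qed.

Definition fibJ (X : C) := fibrant_wrt (fib_of J) X.

Lemma F3 X Y (r : Hom X Y) : fib_of I X Y r ->
  forall A B (i : Hom A B), cof_of I A B i -> V2 i r.
Proof.
  intros Hr. apply ext2; [exact Hcomplete|].
  intros A B i Hi. apply trans_bd; [exact Hcocomplete|].
  intros SA a1 a2 HSA SB b1 b2 HSB u u1 u2 v v1 v2 P p1 p2 HP m m1 m2 m3.
  exact (H3 Hi HSA HSB u1 u2 v1 v2 HP m m1 m2 m3 Hr).
Qed.

Lemma F5 X Y (p : Hom X Y) : fib_of J X Y p -> fibJ X -> fibJ Y ->
  forall A B (i : Hom A B), cof_of J A B i -> V2 i p.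
Proof.
  intros Hp HX HY. apply ext2; [exact Hcomplete|].
  intros A B i Hi. apply trans_bd; [exact Hcocomplete|].
  intros SA a1 a2 HSA SB b1 b2 HSB u u1 u2 v v1 v2 P p1 p2 HP m m1 m2 m3.
  exact (H5 Hi HSA HSB u1 u2 v1 v2 HP m m1 m2 m3 Hp HX HY).
Qed.

Lemma F4_0 X Y (p : Hom X Y) : fib_of J X Y p -> fibJ X -> fibJ Y ->
  forall A B (i : Hom A B), cof_of I A B i -> V1 e0 i p.
Proof.
  intros Hp HX HY. apply (ext1 He0); [exact Hcomplete|].
  intros A B i Hi. apply (trans_end He0); [exact Hcocomplete|].
  intros P p1 p2 HP m m1 m2. exact (H4_0 Hi HP m m1 m2 Hp HX HY).
Qed.

Lemma F4_1 X Y (p : Hom X Y) : fib_of J X Y p -> fibJ X -> fibJ Y ->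
  forall A B (i : Hom A B), cof_of I A B i -> V1 e1 i p.
Proof.
  intros Hp HX HY. apply (ext1 He1); [exact Hcomplete|].
  intros A B i Hi. apply (trans_end He1); [exact Hcocomplete|].
  intros P p1 p2 HP m m1 m2. exact (H4_1 Hi HP m m1 m2 Hp HX HY).
Qed.

Lemma term_fibJ T : is_terminal T -> fibJ T.
Proof. intros HT T' HT' t. apply fib_term_term; assumption. Qed.

Lemma ev0_tfib X : fibJ X -> forall A B (i : Hom A B), cof_of I A B i ->
  forall (a : Hom A (G X)) (x : Hom B X), a >>> ev e0 X = i >>> x ->
  exists h, i >>> h = a /\ h >>> ev e0 X = x.
Proof.
  intros HX A B i Hi a x E.
  destruct (terminal_exists Hcomplete) as [T HT].
  destruct (HT X) as [t _].
  destruct (GT_ex HT B) as [b _].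
  destruct (F4_0 (HX T HT t) HX (term_fibJ HT) Hi a b x) as [h [h1 [_ h3]]].
  - apply (GT_uniq HT).
  - exact E.
  - apply (term_uniq _ HT).
  - exists h; auto.
Qed.

Lemma sigma_ex B : fibJ B -> cofibrant_wrt (cof_of I) B ->
  exists sg : Hom B (G B), sg >>> ev e0 B = cid B.
Proof.
  intros HB HBc.
  destruct (initial_exists Hcocomplete) as [O HO].
  destruct (HO B) as [o _]. destruct (HO (G B)) as [a _].
  destruct (ev0_tfib HB (HBc O HO o) a (cid B)) as [sg [_ s2]].
  - apply (init_uniq _ HO).
  - exists sg; exact s2.
Qed.

Lemma L2 B Z (j : Hom B Z) (r : Hom Z B) : cof_of I B Z j -> fib_of I Z B r ->
  j >>> r = cid B -> cofibrant_wrt (cof_of I) B -> fibJ B ->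
  forall X Y (p : Hom X Y), fib_of J X Y p -> fibJ X -> fibJ Y -> llp j p.
Proof.
  intros Hj Hr jr HBc HB X Y p Hp HX HY u v E.
  destruct (sigma_ex HB HBc) as [sg sg0].
  destruct (mkH jr sg sg0 (F3 Hr Hj)) as [H [H1 [H2 [H3' H4']]]].
  destruct (F4_1 Hp HX HY Hj (sg >>> fmap G u) (H >>> fmap G v) (r >>> (sg >>> (ev e1 B >>> u))))
    as [L [L1 [L2' L3]]].
  - rewrite comp_assoc, <- fmap_comp, E, fmap_comp. rwa H1. reflexivity.
  - rewrite comp_assoc, (ev_nat He1). rwa jr. rewrite comp_id_l. reflexivity.
  - rewrite comp_assoc, (ev_nat He1). rwa H4'. rewrite E. reflexivity.
  - exists (L >>> ev e0 X). split.
    + rwa L1. rewrite (ev_nat He0). rwa sg0. apply comp_id_l.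
    + rewrite comp_assoc, <- (ev_nat He0). rwa L2'. rewrite (ev_nat He0). rwa H3'. apply comp_id_l.
Qed.

Lemma L2d E Y (f : Hom E Y) (s : Hom Y E) : fib_of J E Y f -> cof_of J Y E s ->
  s >>> f = cid Y -> cofibrant_wrt (cof_of I) Y -> fibJ Y -> fibJ E ->
  forall K L (i : Hom K L), cof_of I K L i -> llp i f.
Proof.
  intros Hf Hs sf HYc HY HE K L i Hi u v Eq.
  destruct (sigma_ex HY HYc) as [sg sg0].
  destruct (mkH sf sg sg0 (F5 Hf HE HY Hs)) as [H [H1 [H2 [H3' H4']]]].
  destruct (F4_1 Hf HE HY Hi (u >>> H) (v >>> sg) (v >>> (sg >>> (ev e1 Y >>> s))))
    as [Lf [L1 [L2' L3]]].
  - rwa H2. rwa Eq. reflexivity.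
  - rwa H4'. rwa Eq. reflexivity.
  - rwa sf. rewrite comp_id_r. reflexivity.
  - exists (Lf >>> ev e0 E). split.
    + rwa L1. rwa H3'. apply comp_id_r.
    + rewrite comp_assoc, <- (ev_nat He0). rwa L2'. rwa sg0. apply comp_id_r.
Qed.

Hypotheses (HwfsI : wfs I) (HwfsJ : wfs J).

Lemma fibJ_of X Y (p : Hom X Y) : fib_of J X Y p -> fibJ Y -> fibJ X.
Proof.
  intros Hp HY T HT t. destruct (HT Y) as [w _]. rewrite (term_uniq _ HT t (p >>> w)).
  apply fib_comp; [exact Hp | apply HY; exact HT].
Qed.

Lemma main_wms : exists Cof Fib : MapClass C,
    is_weak_model_structure Cof Fib /\
    (forall X Y (p : Hom X Y),
        (Fib X Y p /\ fibrant Fib X /\ fibrant Fib Y) <->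
        (fib_of J X Y p /\ fibrant_wrt (fib_of J) X /\ fibrant_wrt (fib_of J) Y)) /\
    (forall A B (i : Hom A B),
        (Cof A B i /\ cofibrant Cof A /\ cofibrant Cof B) <->
        (cof_of I A B i /\ cofibrant_wrt (cof_of I) A /\ cofibrant_wrt (cof_of I) B)).
Proof.
  exists (cof_of I), (fib_of J).
  split; [|split; intros; unfold fibrant, cofibrant; tauto].
  split; [|split; [|split; [|split]]].
  -
    split; [|split; [|split; [|split]]].
    + intros A B f Hf _. apply cof_iso; exact Hf.
    + intros A B D f g. apply cof_comp.
    + apply initial_exists; exact Hcocomplete.
    + intros O HO O' HO' o. apply cof_init_init; assumption.
    + intros A B D i f Hi _ _. split.
      * apply pushout_exists; exact Hcocomplete.
      * intros P p1 p2 HP. exact (cof_pushout HP Hi).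
  -
    split; [|split; [|split; [|split]]].
    + intros A B f Hf _. apply fib_iso; exact Hf.
    + intros A B D f g. apply fib_comp.
    + apply terminal_exists; exact Hcomplete.
    + intros T HT T' HT' t. apply fib_term_term; assumption.
    + intros X Y Z p f Hp _ _. split.
      * apply pullback_exists; exact Hcomplete.
      * intros Q q1 q2 HQ. exact (fib_pullback HQ Hp).
  -
    intros A X f _ _. split.
    + destruct (HwfsI _ _ f) as [M [g [h [Hgh [Hg Hh]]]]].
      exists M, g, h. split; [exact Hgh|split; [exact Hg|split]].
      * apply fib_IJ; exact Hh.
      * intros A' B' i Hi _ _. apply Hi, Hh.
    + destruct (HwfsJ _ _ f) as [M [g [h [Hgh [Hg Hh]]]]].
      exists M, g, h. split; [exact Hgh|split; [split|exact Hh]].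
      * apply cof_JI; exact Hg.
      * intros X' Y' p Hp _ _. apply Hg, Hp.
  -
    intros A B i Hi HA HB P in1 in2 HP.
    destruct (proj2 HP B (cid B) (cid B) eq_refl) as [nab [[n1 n2] _]].
    destruct (HwfsI _ _ nab) as [Cy [c [q [Hcq [Hc Hq]]]]].
    exists Cy, c, q. rewrite Hcq. split; [exact n1|split; [exact n2|split; [exact Hc|]]].
    assert (Hin1 : cof_of I B P in1) by exact (cof_pushout (pushout_sym HP) Hi).
    assert (HBc : cofibrant_wrt (cof_of I) B).
    { intros O HO o. destruct (HO A) as [oa _].
      rewrite (init_uniq _ HO o (oa >>> i)). apply cof_comp; [apply HA; exact HO | exact Hi]. }
    split.
    + apply cof_comp; assumption.
    + intros X Y p Hp HX HY. apply (L2 (cof_comp Hin1 Hc) Hq); try assumption.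
      rewrite comp_assoc, Hcq. exact n1.
  -
    intros X Y p Hp HY HX Q pr1 pr2 HQ.
    destruct (proj2 HQ Y (cid Y) (cid Y) eq_refl) as [dl [[d1 d2] _]].
    destruct (HwfsJ _ _ dl) as [Pt [s [q [Hsq [Hs Hq]]]]].
    exists Pt, s, q. rewrite Hsq. split; [exact d1|split; [exact d2|split; [exact Hq|]]].
    assert (Hpr1 : fib_of J Q Y pr1) by exact (fib_pullback (pullback_sym HQ) Hp).
    assert (HYf : fibJ Y) by exact (fibJ_of Hp HX).
    assert (Hf : fib_of J Pt Y (q >>> pr1)) by (apply fib_comp; assumption).
    split; [exact Hf|].
    intros K L i Hi _ _. apply (L2d Hf Hs); try assumption.
    + rewrite <- comp_assoc, Hsq. exact d1.
    + exact (fibJ_of Hf HYf).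
Qed.

End Adj.


Unset Implicit Arguments.

Theorem theorem3p5 (C : Category) (I J : MapClass C)
  (Hcomplete : complete C) (Hcocomplete : cocomplete C)
  (* (1) *)
  (HwfsI : wfs I) (HwfsJ : wfs J)
  (HJI : forall A B (j : Hom A B), J A B j -> cof_of I A B j)
  (* (2) *)
  (Cyl : Endofunctor C) (HCadj : is_left_adjoint Cyl)
  (e0 e1 : forall X : C, Hom X (Cyl X))
  (He0 : nat_from_id Cyl e0) (He1 : nat_from_id Cyl e1)
  (* (3) *)
  (H3 : forall A B (i : Hom A B), I A B i ->
          boundary_map_has Cyl e0 e1 i (cof_of I))
  (* (4) *)
  (H4_0 : forall A B (i : Hom A B), I A B i -> end_map_has Cyl e0 i (llp_Jfib_fibrant J))
  (H4_1 : forall A B (i : Hom A B), I A B i -> end_map_has Cyl e1 i (llp_Jfib_fibrant J))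
  (* (5) *)
  (H5 : forall A B (j : Hom A B), J A B j ->
          boundary_map_has Cyl e0 e1 j (llp_Jfib_fibrant J)) :
  exists Cof Fib : MapClass C,
    is_weak_model_structure Cof Fib /\
    (forall X Y (p : Hom X Y),
        (Fib X Y p /\ fibrant Fib X /\ fibrant Fib Y) <->
        (fib_of J X Y p /\ fibrant_wrt (fib_of J) X /\ fibrant_wrt (fib_of J) Y)) /\
    (forall A B (i : Hom A B),
        (Cof A B i /\ cofibrant Cof A /\ cofibrant Cof B) <->
        (cof_of I A B i /\ cofibrant_wrt (cof_of I) A /\ cofibrant_wrt (cof_of I) B)).
Proof.
  destruct HCadj as (G & eta & eps & h1 & h2 & h3 & h4).
  exact (@main_wms C Cyl G eta eps h1 h2 h3 h4 e0 e1 He0 He1 I J Hcomplete Hcocomplete HJI H3 H4_0 H4_1 H5 HwfsI HwfsJ).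
Qed.
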